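(* Let $\Theta\subseteq\mathbb{R}^d$ be an open set equipped with a Riemannian metric $g$, let $V_1,\dots,V_N:\Theta\to\mathbb{R}$ and $f:\Theta\to\mathbb{R}$ be twice continuously differentiable, and fix $\vec\theta\in\Theta$. Let $C=\mathrm{Con}(\{\mathtt{grad}\,V_i(\vec\theta)\}_{i=1}^N)$ and assume its dual $C^\perp$ is nonempty. Then $\mathtt{grad}\,f(\vec\theta)\notin C$ if and only if there exists a direction $\delta\vec\theta\in\mathbb{R}^d$ such that $\mathscr{V}^i_{f,\delta\vec\theta}(\vec\theta)<0$ for all $i=1,\dots,N$.
   Context: Inner products are $\langle\vec v,\vec w\rangle=g_{ij}(\vec\theta)v^iw^j$ and the gradient is $(\mathtt{grad}\,h)^i=g^{ij}\partial h/\partial\theta^j$ with $g^{ij}$ the inverse of $g_{ij}$. For nonzero vectors $\vec v_1,\dots,\vec v_N$, the conic hull is $\mathrm{Con}(\{\vec v_i\})=\{\sum_i\alpha^i\vec v_i:\alpha^i\ge0\ \forall i\}$, and its dual is $\mathrm{Con}(\{\vec v_i\})^\perp=\{\vec v:\langle\vec v,\vec v_i\rangle<0\text{ for all }i\}$. The differential value to player $i$ of $f$ in direction $\delta\vec\theta$ at $\vec\theta$ is $\mathscr{V}^i_{f,\delta\vec\theta}(\vec\theta)=\dfrac{\langle\mathtt{grad}\,V_i(\vec\theta),\delta\vec\theta\rangle}{\langle\mathtt{grad}\,f(\vec\theta),\delta\vec\theta\rangle}=\dfrac{\partial_kV_i(\vec\theta)\,\delta\theta^k}{\partial_kf(\vec\theta)\,\delta\theta^k}$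 (here $V_i$ is interpreted as the equilibrium expected utility of player $i$ in a game with parameter $\vec\theta$). *)

(* Defs.v *)
From mathcomp Require Import all_boot all_order all_algebra.
From mathcomp Require Import all_classical all_reals all_analysis.
Import numFieldNormedType.Exports.
Set Implicit Arguments. Unset Strict Implicit. Unset Printing Implicit Defensive.
Import Order.TTheory GRing.Theory Num.Theory.
Local Open Scope classical_set_scope.
Local Open Scope ring_scope.

Section Defs.
Variables (R : realType) (d : nat).
Implicit Types (h : 'rV[R]_d -> R) (U : set 'rV[R]_d).

Definition ebasis (j : 'I_d) : 'rV[R]_d := delta_mx 0 j.

Definition partial h (j : 'I_d) : 'rV[R]_d -> R := fun x => 'D_(ebasis j) h x.

Definition ipartial h (s : seq 'I_d) : 'rV[R]_d -> R :=
  foldr (fun j g => partial g j) h s.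

(* h is C^k on U: all partial derivatives of order <= k exist on U and are
   continuous on U (on an open U this is exactly C^k). *)
Definition Ck_on (k : nat) U h : Prop :=
  forall s : seq 'I_d, (size s <= k)%N ->
    {within U, continuous (ipartial h s)} /\
    ((size s < k)%N -> forall x, U x -> forall j, derivable (ipartial h s) x (ebasis j)).

Definition smooth_on U h : Prop := forall k, Ck_on k U h.

Definition riemannian_metric U (g : 'rV[R]_d -> 'M[R]_d) : Prop :=
  (forall i j, smooth_on U (fun x => g x i j)) /\
  (forall x, U x -> (g x)^T = g x) /\
  (forall x, U x -> forall v : 'rV[R]_d, v != 0 -> 0 < (v *m g x *m v^T) 0 0).

Definition inner (g : 'rV[R]_d -> 'M[R]_d) (th v w : 'rV[R]_d) : R :=
  \sum_(i < d) \sum_(j < d) g th i j * v 0 i * w 0 j.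

Definition grad (g : 'rV[R]_d -> 'M[R]_d) h (th : 'rV[R]_d) : 'rV[R]_d :=
  \row_i \sum_(j < d) (invmx (g th)) i j * partial h j th.

Definition conic_hull (N : nat) (v : 'I_N -> 'rV[R]_d) : set 'rV[R]_d :=
  [set w | exists alpha : 'I_N -> R,
             (forall i, 0 <= alpha i) /\ w = \sum_(i < N) alpha i *: v i].

Definition dual_cone (g : 'rV[R]_d -> 'M[R]_d) (th : 'rV[R]_d) (N : nat)
  (v : 'I_N -> 'rV[R]_d) : set 'rV[R]_d :=
  [set w | forall i, inner g th w (v i) < 0].

Definition diff_value (g : 'rV[R]_d -> 'M[R]_d) (Vi f : 'rV[R]_d -> R)
  (dth th : 'rV[R]_d) : R :=
  inner g th (grad g Vi th) dth / inner g th (grad g f th) dth.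

End Defs.

(* Main.v *)
Require Import Defs.
From mathcomp Require Import all_boot all_order all_algebra.
From mathcomp Require Import all_classical all_reals all_analysis.
From mathcomp Require Import ring lra.
Import numFieldNormedType.Exports.
Import Order.TTheory GRing.Theory Num.Theory.
Local Open Scope classical_set_scope.
Local Open Scope ring_scope.

Section Farkas.
Variables (R : realType) (d : nat).

Definition dot (y v : 'rV[R]_d) : R := (y *m v^T) 0 0.

Lemma dotC y v : dot y v = dot v y.
Proof. by rewrite /dot !mxE; apply: eq_bigr => j _; rewrite !mxE mulrC. Qed.

Lemma dotBl a b v : dot (a - b) v = dot a v - dot b v.
Proof. by rewrite /dot mulmxBl !mxE. Qed.
Lemma dotDl a b v : dot (a + b) v = dot a v + dot b v.
Proof. by rewrite /dot mulmxDl !mxE. Qed.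
Lemma dotZl k a v : dot (k *: a) v = k * dot a v.
Proof. by rewrite /dot -scalemxAl mxE. Qed.
Lemma dotBr a b v : dot v (a - b) = dot v a - dot v b.
Proof. by rewrite !(dotC v) dotBl. Qed.
Lemma dotZr k a v : dot v (k *: a) = k * dot v a.
Proof. by rewrite !(dotC v) dotZl. Qed.

Lemma dot_self_gt0 b : b != 0 -> 0 < dot b b.
Proof.
move=> bn0.
have /existsP [k bk] : [exists k, b 0 k != 0].
  apply: contraNT bn0 => /existsPn H; apply/eqP/rowP => j.
  by rewrite mxE; have := H j; rewrite negbK => /eqP.
have -> : dot b b = \sum_k b 0 k * b 0 k.
  by rewrite /dot mxE; apply: eq_bigr => j _; rewrite mxE.
rewrite (bigD1 k) //=; apply: (@lt_le_trans _ _ (b 0 k * b 0 k)).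
  by rewrite -expr2 lt_def sqrf_eq0 bk sqr_ge0.
rewrite lerDl; apply: sumr_ge0 => j _; by rewrite -expr2 sqr_ge0.
Qed.

Fixpoint incone (s : seq 'rV[R]_d) (b : 'rV[R]_d) : Prop :=
  match s with
  | [::] => b = 0
  | a :: s' => exists t, 0 <= t /\ incone s' (b - t *: a)
  end.

Lemma incone_cons a s b : incone s b -> incone (a :: s) b.
Proof. by move=> H; exists 0; rewrite scale0r subr0. Qed.

Lemma incone_map (y a0 : 'rV[R]_d) c s x :
  (forall a, a \in s -> dot y a <= 0) ->
  incone (map (fun a => c *: a - dot y a *: a0) s) x ->
  exists u K, incone s u /\ 0 <= K /\ x = c *: u + K *: a0.
Proof.
elim: s x => [|a s IH] x Hs /=.
  by move=> ->; exists 0, 0; rewrite scaler0 scale0r addr0.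
move=> [t [t0 Hx]].
have [u [K [Hu [K0 E]]]] := IH _ (fun a' Ha' => Hs a' (mem_behead (s:=a::s) Ha')) Hx.
have ya := Hs a (mem_head a s).
exists (u + t *: a), (K - t * dot y a); split.
  by exists t; split => //; rewrite addrK.
split; first by have := mulr_ge0_le0 t0 ya; lra.
rewrite -[x](subrK (t *: (c *: a - dot y a *: a0))) E.
by apply/rowP => k; rewrite !mxE; ring.
Qed.

Lemma farkas n : forall s b, size s = n -> ~ incone s b ->
  exists y, (forall a, a \in s -> dot y a <= 0) /\ 0 < dot y b.
Proof.
elim: n => [|n IH] [|a0 s] b //= Hsz Hb.
  exists b; split => //; apply: dot_self_gt0; apply/eqP => b0; exact: Hb.
case: Hsz => Hsz.
have Hb' : ~ incone s b by move=> H; apply: Hb; apply: incone_cons.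
have [y [Hy Hyb]] := IH s b Hsz Hb'.
case: (lerP (dot y a0) 0) => Ha0.
  exists y; split => // a; rewrite inE => /orP [/eqP -> | Ha] //; exact: Hy.
set c := dot y a0.
have cne : c != 0 by rewrite gt_eqF.
set phi := fun a => c *: a - dot y a *: a0.
have Hb2 : ~ incone (map phi s) (c *: b - dot y b *: a0).
  move=> H; have [u [K [Hu [K0 E]]]] := @incone_map y a0 c s _ Hy H.
  apply: Hb; exists ((K + dot y b) / c); split.
    by apply: divr_ge0; [lra | exact: ltW].
  suff -> : b - (K + dot y b) / c *: a0 = u by [].
  apply/rowP => k; have := congr1 (fun M : 'rV[R]_d => M 0 k) E.
  rewrite !mxE => Ek.
  have -> : u 0 k = (c * b 0 k - dot y b * a0 0 k - K * a0 0 k) / c.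
    rewrite Ek; field; exact: cne.
  by field.
have [y' [Hy' Hyb']] := IH _ _ (etrans (size_map _ _) Hsz) Hb2.
exists (y' - (dot y' a0 / c) *: y); split.
  move=> a; rewrite inE => /orP [/eqP -> | Ha].
    rewrite dotBl dotZl -/c divfK //.
    by rewrite subrr.
  have := Hy' (phi a) (map_f _ Ha).
  have -> : dot (y' - dot y' a0 / c *: y) a = dot y' (phi a) / c.
    rewrite /phi dotBl dotZl dotBr !dotZr -/c; field; exact: cne.
  move=> H; rewrite ler_pdivrMr // mul0r //.
have -> : dot (y' - dot y' a0 / c *: y) b = dot y' (c *: b - dot y b *: a0) / c.
  rewrite dotBl dotZl dotBr !dotZr -/c; field; exact: cne.
by apply: divr_gt0.
Qed.

Lemma incone_enum N (p : 'I_N -> 'rV[R]_d) r b : incone (map p r) b ->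
  exists alpha : 'I_N -> R, (forall i, 0 <= alpha i) /\
    b = \sum_(i < N) alpha i *: p i.
Proof.
elim: r b => [|j r IH] b /=.
  by move=> ->; exists (fun _ => 0); split => //; rewrite big1 // => i _; rewrite scale0r.
move=> [t [t0 H]]; have [al [al0 E]] := IH _ H.
exists (fun i => al i + t * (i == j)%:R); split.
  by move=> i; apply: addr_ge0 => //; apply: mulr_ge0 => //; rewrite ler0n.
under eq_bigr do rewrite scalerDl.
rewrite big_split /= -E (bigD1 j) //= eqxx mulr1 big1 ?addr0 ?subrK //.
by move=> i /negbTE ->; rewrite mulr0 scale0r.
Qed.

End Farkas.
Arguments incone_map {R d y a0 c s x}.
Arguments incone_enum {R d N p r b}.
Arguments farkas {R d}.
Arguments dot {R d}.

Definition pvec (R : realType) (d : nat) (h : 'rV[R]_d -> R) (th : 'rV[R]_d)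
  : 'rV[R]_d := \row_j partial h j th.
Arguments pvec {R d}.

Lemma grad_eq (R : realType) (d : nat) g (h : 'rV[R]_d -> R) th :
  grad g h th = pvec h th *m (invmx (g th))^T.
Proof. by apply/rowP => i; rewrite !mxE; apply: eq_bigr => j _; rewrite !mxE mulrC. Qed.

Lemma inner_eq (R : realType) (d : nat) (g : 'rV[R]_d -> 'M[R]_d) th v w :
  inner g th v w = (v *m g th *m w^T) 0 0.
Proof.
rewrite /inner mxE exchange_big; apply: eq_bigr => j _.
rewrite !mxE mulr_suml; apply: eq_bigr => i _; ring.
Qed.

Theorem proposition3 (R : realType) (d N : nat) (Theta : set 'rV[R]_d)
  (g : 'rV[R]_d -> 'M[R]_d) (V : 'I_N -> 'rV[R]_d -> R) (f : 'rV[R]_d -> R)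
  (th : 'rV[R]_d) :
  (0 < N)%N ->
  open Theta ->
  riemannian_metric Theta g ->
  (forall i, Ck_on 2 Theta (V i)) ->
  Ck_on 2 Theta f ->
  Theta th ->
  dual_cone g th (fun i => grad g (V i) th) !=set0 ->
  (~ conic_hull (fun i => grad g (V i) th) (grad g f th) <->
   exists dth : 'rV[R]_d, forall i, diff_value g (V i) f dth th < 0).
Proof.
move=> N0 _ [_ [Gsym Gpd]] _ _ Tth [z Hz].
have Gs := Gsym th Tth.
have GU : g th \in unitmx.
  rewrite unitmxE unitfE; apply/negP => /det0P [v vn0 vG].
  by have := Gpd th Tth v vn0; rewrite vG mul0mx mxE ltxx.
have Key : forall h w, inner g th (grad g h th) w = dot (pvec h th) w.
  move=> h w; rewrite inner_eq grad_eq trmx_inv Gs -(mulmxA (pvec h th)).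
  by rewrite mulVmx // mulmx1.
split.
- move=> Hnc.
  have := @farkas R d _ (map (fun i => pvec (V i) th) (enum 'I_N)) (pvec f th) erefl.
  case.
    move=> H; apply: Hnc; have [al [al0 E]] := incone_enum H.
    exists al; split => //; rewrite grad_eq E mulmx_suml; apply: eq_bigr => i _.
    by rewrite grad_eq scalemxAl.
  move=> y [Hy Hyf].
  have Hzi : forall i, dot z (pvec (V i) th) < 0.
    move=> i; have := Hz i; rewrite /= inner_eq grad_eq trmx_mul trmxK.
    by rewrite mulmxA -(mulmxA z) mulmxV // mulmx1.
  have Hyi : forall i, dot y (pvec (V i) th) <= 0.
    by move=> i; apply: Hy; apply: map_f; rewrite mem_enum.
  set dzf := dot z (pvec f th).
  set e := dot y (pvec f th) / (1 + `|dzf|).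
  have n0 : 0 < 1 + `|dzf| by have := normr_ge0 dzf; lra.
  have e0 : 0 < e by apply: divr_gt0.
  have ee : e * (1 + `|dzf|) = dot y (pvec f th) by rewrite divfK // gt_eqF.
  exists (y + e *: z) => i.
  rewrite /diff_value !Key dotC [X in _ / X]dotC !dotDl !dotZl.
  have H1 := Hyi i; have H2 := Hzi i.
  have H3 : e * dot z (pvec (V i) th) < 0 by rewrite pmulr_rlt0.
  have H4 : 0 < dot y (pvec f th) + e * dzf.
    have : - `|dzf| <= dzf by rewrite lerNl ler_normr lexx orbT.
    move=> Hn; have := ler_wpM2l (ltW e0) Hn; nra.
  by rewrite ltr_pdivrMr // mul0r; lra.
- move=> [dth Hd] [al [al0 E]].
  set D := inner g th (grad g f th) dth.
  have HD : D = \sum_i al i * inner g th (grad g (V i) th) dth.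
    rewrite /D E inner_eq !mulmx_suml summxE; apply: eq_bigr => i _.
    by rewrite -!scalemxAl mxE inner_eq.
  have Hd' : forall i, inner g th (grad g (V i) th) dth / D < 0 := Hd.
  have Dne : D != 0.
    apply/eqP => D0; have := Hd' (Ordinal N0); by rewrite D0 invr0 mulr0 ltxx.
  have DD : 0 < D * D by rewrite -expr2 lt_def sqrf_eq0 Dne sqr_ge0.
  have : D * D <= 0.
    rewrite {1}HD mulr_suml -oppr_ge0 -sumrN; apply: sumr_ge0 => i _.
    rewrite oppr_ge0 -mulrA; apply: mulr_ge0_le0 => //.
    set x := inner g th (grad g (V i) th) dth.
    have -> : x * D = x / D * (D * D) by rewrite mulrA divfK.
    by apply: ltW; rewrite pmulr_llt0 //; exact: Hd'.
  lra.
Qed.
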